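(* Let $rr(n)$ be the number of partitions of $n$ into parts congruent to $\pm1\pmod5$, i.e. $\sum_{n\ge0}rr(n)q^n=\prod_{i\ge0}\frac{1}{(1-q^{5i+1})(1-q^{5i+4})}$. Let $a_i$ be the coefficients of $\sum_{j\in\mathbb Z}(-1)^jq^{j(5j-1)/2}=\sum_{i\ge0}a_iq^i$; explicitly $a_i=1$ if $i=10j^2\pm j$ for some integer $j\ge0$, $a_i=-1$ if $i=10j^2\pm9j+2$ for some integer $j\ge0$, and $a_i=0$ otherwise. Then for every $n\ge0$, $$rr(n)=\sum_{i=0}^n a_i\sum_{\substack{c\in\mathcal C_{P_5}\\ |c|=n-i}}(-1)^{\widehat\ell(c)},$$ where $P_5=\{m(3m\pm1)/2: m\in\mathbb N\}$.
   Context: A composition is an ordered finite sequence of positive integers (including the empty one); $|c|$ is the sum of parts; $\mathcal C_T$ is the set of compositions with all parts in $T$. $\widehat P:=\{m(3m\pm1)/2: m\in\mathbb N,\ m\text{ even}\}$, and $\widehat\ell(c)$ is the number of parts of $c$ lying in $\widehat P$. *)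

(* Defs.v *)
From mathcomp Require Import all_boot all_order all_algebra.
Set Implicit Arguments. Unset Strict Implicit. Unset Printing Implicit Defensive.
Import Order.TTheory GRing.Theory Num.Theory.

(* comps_fuel f n : all compositions (ordered lists of positive integers) of n,
   provided n <= f.  The first part k ranges over 1..n. *)
Fixpoint comps_fuel (f n : nat) : seq (seq nat) :=
  if n is 0 then [:: [::]] else
  if f is f'.+1 then
    flatten [seq [seq k :: c | c <- comps_fuel f' (n - k)] | k <- iota 1 n]
  else [::].

Definition comps (n : nat) : seq (seq nat) := comps_fuel n n.

(* Generalized pentagonal numbers P_5 = { m(3m+-1)/2 : m >= 1 }.
   (m <= k suffices since m(3m-1)/2 >= m.) *)
Definition inP5 (k : nat) : bool :=
  has (fun m => (2 * k == m * (3 * m + 1)) || (2 * k == m * (3 * m - 1)))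
      (iota 1 k).

Definition inPhat (k : nat) : bool :=
  has (fun m => ~~ odd m &&
        ((2 * k == m * (3 * m + 1)) || (2 * k == m * (3 * m - 1))))
      (iota 1 k).

Definition ellhat (c : seq nat) : nat := count inPhat c.

Definition rr (n : nat) : nat :=
  count (fun c => sorted geq c && all (fun p => (p %% 5 == 1) || (p %% 5 == 4)) c)
        (comps n).

(* a_i : coefficient of q^i in sum_{j in Z} (-1)^j q^{j(5j-1)/2}.
   Only j with |j| <= i can contribute, so we sum over j = k - i, k < 2i+1. *)
Definition acoef (i : nat) : int :=
  \sum_(k < (2 * i).+1)
     let j : int := (k%:Z - i%:Z)%R in
     if (j * (5 * j - 1) == 2 * i%:Z)%R then ((-1) ^+ `|j|%N)%R else 0%R.

(* Main.v *)
Require Import Defs.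
From mathcomp Require Import all_boot all_order all_algebra.
From mathcomp Require Import ring lra zify.
Import Order.TTheory GRing.Theory Num.Theory.
Local Open Scope ring_scope.


Definition eqm (L : nat) (p q : {poly int}) := forall i, (i < L)%N -> p`_i = q`_i.

Lemma eqm_refl L p : eqm L p p. Proof. by []. Qed.
Lemma eqm_sym L p q : eqm L p q -> eqm L q p.
Proof. by move=> h i /h ->. Qed.
Lemma eqm_trans L p q r : eqm L p q -> eqm L q r -> eqm L p r.
Proof. by move=> h1 h2 i hi; rewrite h1 // h2. Qed.
Lemma eqmD L p q p' q' : eqm L p q -> eqm L p' q' -> eqm L (p + p') (q + q').
Proof. by move=> h1 h2 i hi; rewrite !coefD h1 // h2. Qed.
Lemma eqmN L p q : eqm L p q -> eqm L (- p) (- q).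
Proof. by move=> h1 i hi; rewrite !coefN h1. Qed.
Lemma eqmM L p q p' q' : eqm L p q -> eqm L p' q' -> eqm L (p * p') (q * q').
Proof.
move=> h1 h2 i hi; rewrite !coefM; apply: eq_bigr => j _.
have hj : (j < L)%N by apply: leq_ltn_trans hi; rewrite -ltnS.
by rewrite h1 // h2 //; apply: leq_ltn_trans hi; apply: leq_subr.
Qed.
Lemma eqm_le L L' p q : (L' <= L)%N -> eqm L p q -> eqm L' p q.
Proof. by move=> hl h i hi; apply: h; apply: leq_trans hl. Qed.
Lemma eqmX0 L k p : (L <= k)%N -> eqm L ('X^k * p) 0.
Proof.
move=> hk i hi; rewrite coefXnM coef0.
by rewrite (leq_trans hi hk).
Qed.
Lemma eqmX0' L k : (L <= k)%N -> eqm L ('X^k) 0.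
Proof. by move=> hk; rewrite -(mulr1 'X^k); apply: eqmX0. Qed.
Lemma eqm_sum L (I : Type) (r : seq I) (P : pred I) (F G : I -> {poly int}) :
  (forall i, P i -> eqm L (F i) (G i)) ->
  eqm L (\sum_(i <- r | P i) F i) (\sum_(i <- r | P i) G i).
Proof.
move=> h k hk; rewrite !coef_sum; apply: eq_bigr => i /h; exact.
Qed.

Lemma geom_inv L k : (0 < k)%N -> exists w, eqm L ((1 - 'X^k) * w) 1.
Proof.
move=> k0; exists (\sum_(j < L) 'X^(k * j)).
have -> : (1 - 'X^k) * \sum_(j < L) 'X^(k * j) = 1 - 'X^(k * L) :> {poly int}.
  elim: L => [|L IH]; first by rewrite big_ord0 muln0 expr0 mulr0 subrr.
  rewrite big_ord_recr /= mulrDr IH mulnS exprD; ring.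
rewrite -[X in eqm _ _ X]subr0; apply: eqmD; first exact: eqm_refl.
apply: eqmN; apply: eqmX0'; by rewrite leq_pmull.
Qed.

Fixpoint qbin (Q : {poly int}) (a : nat) : nat -> {poly int} :=
  match a with
  | 0 => fun _ => 1
  | a'.+1 => fix qd d := match d with
             | 0 => 1
             | d'.+1 => qbin Q a' d + Q ^+ a * qd d'
             end
  end.

Lemma qbin0l Q d : qbin Q 0 d = 1. Proof. by []. Qed.
Lemma qbin0r Q a : qbin Q a 0 = 1. Proof. by case: a. Qed.
Lemma qbinSS Q a d : qbin Q a.+1 d.+1 = qbin Q a d.+1 + Q ^+ a.+1 * qbin Q a.+1 d.
Proof. by []. Qed.

Lemma qbin_pascal2 Q a d :
  qbin Q a.+1 d.+1 = qbin Q a.+1 d + Q ^+ d.+1 * qbin Q a d.+1.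
Proof.
elim: a d => [|a IHa] d.
  elim: d => [|d IHd]; first by rewrite qbinSS !qbin0r qbin0l; ring.
  have e : qbin Q 1 d.+2 = 1 + Q ^+ 1 * qbin Q 1 d.+1 by [].
  have e' : qbin Q 1 d.+1 = 1 + Q ^+ 1 * qbin Q 1 d by [].
  rewrite e {1}IHd e' !qbin0l !exprS; ring.
elim: d => [|d IHd].
  rewrite qbinSS !qbin0r.
  have h : forall a, qbin Q a 1 + Q ^+ a.+1 = 1 + Q * qbin Q a 1.
    elim=> [|b IHb]; first by rewrite qbin0l; ring.
    rewrite !qbinSS !qbin0r !mulr1 {1}IHb !exprS; ring.
  by rewrite -h mulr1.
rewrite {1}(qbinSS Q a.+1 d.+1) {1}(IHa d.+1) {1}IHd.
rewrite (qbinSS Q a.+1 d) (qbinSS Q a d.+1) !exprS; ring.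
Qed.

Definition qpoch (Q : {poly int}) (k : nat) := \prod_(i < k) (1 - Q ^+ i.+1).

Lemma qpS Q k : qpoch Q k.+1 = qpoch Q k * (1 - Q ^+ k.+1).
Proof. by rewrite /qpoch big_ord_recr. Qed.

Lemma qbin_poch Q a d : qbin Q a d * qpoch Q a * qpoch Q d = qpoch Q (a + d).
Proof.
elim: a d => [|a IHa] d.
  by rewrite qbin0l /qpoch big_ord0 !mul1r.
elim: d => [|d IHd].
  by rewrite qbin0r /qpoch big_ord0 addn0 !mulr1 mul1r.
have e1 := IHa d.+1. have e2 := IHd.
rewrite qpS addnS in e1. rewrite qpS addSn in e2.
rewrite addSn addnS qbinSS (qpS Q a) (qpS Q d) (qpS Q (a + d).+1).
have -> : Q ^+ (a + d).+2 = Q ^+ a.+1 * Q ^+ d.+1 by rewrite -exprD addSn addnS.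
transitivity (qpoch Q (a + d).+1 * (1 - Q ^+ a.+1) + Q ^+ a.+1 * qpoch Q (a + d).+1 * (1 - Q ^+ d.+1)); last by ring.
rewrite -{1}e1 -e2; ring.
Qed.


Definition Tp (m K : nat) : nat :=
  if (m < K)%N then 'C(K - m, 2) else 'C(m - K + 1, 2).

Lemma C2D n : ('C(n, 2) * 2 = n * n.-1)%N.
Proof.
elim: n => [|n IH] //; rewrite binS bin1 mulnDl IH /=.
case: n {IH} => [|n] //=; lia.
Qed.

Lemma TpD m K : ((Tp m K)%:Z * 2 = (K%:Z - m%:Z) * (K%:Z - m%:Z - 1))%R.
Proof.
rewrite /Tp; case: ltnP => h.
  have := C2D (K - m); set t := 'C(_, _) => ht.
  have -> : (t%:Z * 2 = (t * 2)%N%:Z)%R by rewrite PoszM.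
  rewrite ht; have -> : (K - m = (K - m).-1.+1)%N by lia.
  rewrite PoszM /=. nia.
have := C2D (m - K + 1); set t := 'C(_, _) => ht.
have -> : (t%:Z * 2 = (t * 2)%N%:Z)%R by rewrite PoszM.
rewrite ht addn1 /= PoszM. nia.
Qed.

Lemma TpSS m K : Tp m.+1 K.+1 = Tp m K.
Proof. by rewrite /Tp ltnS !subSS. Qed.

Lemma TpS m K : (Tp m.+1 K + K = Tp m K + m.+1)%N.
Proof.
have h1 := TpD m.+1 K; have h2 := TpD m K.
nia.
Qed.

Definition Gq (b N K : nat) : {poly int} :=
  if (K <= N)%N then qbin ('X^b) K (N - K) else 0.

Lemma Gq0 b N : Gq b N 0 = 1.
Proof. by rewrite /Gq leq0n qbin0l. Qed.
Lemma Gq_gt b N K : (N < K)%N -> Gq b N K = 0.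
Proof. by rewrite /Gq ltnNge => /negbTE ->. Qed.

Lemma Gq_pascal1 b N K :
  Gq b N.+1 K.+1 = Gq b N K + 'X^b ^+ K.+1 * Gq b N K.+1.
Proof.
rewrite /Gq ltnS subSS.
case: (ltngtP K N) => h.
- have -> : (N - K = (N - K.+1).+1)%N by lia.
  by rewrite qbinSS.
- by rewrite mulr0 addr0.
- by subst K; rewrite subnn !qbin0r mulr0 addr0.
Qed.

Lemma Gq_pascal2 b N K : (K <= N)%N ->
  Gq b N.+1 K.+1 = Gq b N K.+1 + 'X^b ^+ (N - K) * Gq b N K.
Proof.
move=> hK; rewrite /Gq ltnS subSS hK.
case: (ltngtP K N) => h.
- have -> : (N - K = (N - K.+1).+1)%N by lia.
  by rewrite qbin_pascal2.
- lia.
- by subst K; rewrite subnn !qbin0r expr0 mulr1 add0r.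
Qed.

Definition uu (b c m K : nat) : {poly int} := (-1) ^+ (K + m) * 'X^(b * Tp m K + c * K).
Definition LL (b c m n : nat) : {poly int} :=
  (\prod_(i < n) (1 - 'X^(c + b * i))) * \prod_(i < m) ('X^c - 'X^(b * i.+1)).
Definition SS (b c m n : nat) : {poly int} :=
  \sum_(0 <= K < (m + n).+1) uu b c m K * Gq b (m + n) K.

Lemma key_step s e1 e2 a e0 (G : {poly int}) : (e1 + e2 = a + e0)%N ->
  (-1) ^+ s.+1 * 'X^e1 * ('X^e2 * G) = - 'X^a * ((-1) ^+ s * 'X^e0 * G).
Proof.
move=> h.
have h2 : 'X^e1 * 'X^e2 = 'X^a * 'X^e0 :> {poly int} by rewrite -!exprD h.
rewrite exprS.
transitivity (-((-1) ^+ s * ('X^e1 * 'X^e2) * G)); first ring.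
rewrite h2; ring.
Qed.

Lemma key_step0 s e1 a e0 (G : {poly int}) : (e1 = a + e0)%N ->
  (-1) ^+ s * 'X^e1 * G = 'X^a * ((-1) ^+ s * 'X^e0 * G).
Proof. move=> ->; rewrite exprD; ring. Qed.

Lemma SS_stepn b c m n : SS b c m n.+1 = (1 - 'X^(c + b * n)) * SS b c m n.
Proof.
rewrite /SS addnS; set N := (m + n)%N.
rewrite big_nat_recl // Gq0 mulr1.
rewrite (@eq_big_nat _ _ _ 0 N.+1 _ (fun K => uu b c m K.+1 * Gq b N K.+1
           + uu b c m K.+1 * ('X^b ^+ (N - K) * Gq b N K))); last first.
  by move=> K /andP [_ hK]; rewrite Gq_pascal2 // mulrDr.
rewrite big_split /= addrA.
have -> : uu b c m 0 + \sum_(0 <= i < N.+1) uu b c m i.+1 * Gq b N i.+1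
   = \sum_(0 <= i < N.+1) uu b c m i * Gq b N i.
  rewrite -[uu b c m 0]mulr1 -(Gq0 b N) -(@big_nat_recl _ 0 +%R N.+1 0 (fun i => uu b c m i * Gq b N i)) //.
  by rewrite big_nat_recr //= (Gq_gt b N N.+1 (ltnSn N)) mulr0 addr0.
rewrite (@eq_big_nat _ _ _ 0 N.+1 (fun K => uu b c m K.+1 * ('X^b ^+ (N - K) * Gq b N K)) (fun K => - 'X^(c + b * n) * (uu b c m K * Gq b N K))); last first.
  move=> K /andP [_ hK]; rewrite /uu addSn -exprM.
  apply: key_step.
  have h1 := TpS m K.+1; rewrite TpSS in h1.
  rewrite /N in hK; nia.
rewrite -big_distrr /=; ring.
Qed.

Lemma SS_stepm b c m n : SS b c m.+1 n = ('X^c - 'X^(b * m.+1)) * SS b c m n.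
Proof.
rewrite /SS addSn; set N := (m + n)%N.
rewrite big_nat_recl // Gq0 mulr1.
rewrite (@eq_big_nat _ _ _ 0 N.+1 _ (fun K => uu b c m.+1 K.+1 * Gq b N K
           + uu b c m.+1 K.+1 * ('X^b ^+ K.+1 * Gq b N K.+1))); last first.
  by move=> K _; rewrite Gq_pascal1 mulrDr.
rewrite big_split /= addrCA.
have -> : uu b c m.+1 0 + \sum_(0 <= i < N.+1) uu b c m.+1 i.+1 * ('X^b ^+ i.+1 * Gq b N i.+1)
   = \sum_(0 <= i < N.+1) uu b c m.+1 i * ('X^b ^+ i * Gq b N i).
  have -> : uu b c m.+1 0 = uu b c m.+1 0 * ('X^b ^+ 0 * Gq b N 0) by rewrite Gq0 expr0 !mulr1.
  rewrite -(@big_nat_recl _ 0 +%R N.+1 0 (fun i => uu b c m.+1 i * ('X^b ^+ i * Gq b N i))) //.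
  by rewrite big_nat_recr //= (Gq_gt b N N.+1 (ltnSn N)) !mulr0 addr0.
rewrite (@eq_big_nat _ _ _ 0 N.+1 (fun K => uu b c m.+1 K * ('X^b ^+ K * Gq b N K)) (fun K => - 'X^(b * m.+1) * (uu b c m K * Gq b N K))); last first.
  move=> K _; rewrite /uu addnS -exprM.
  apply: key_step.
  have h1 := TpS m K; nia.
rewrite (@eq_big_nat _ _ _ 0 N.+1 (fun K => uu b c m.+1 K.+1 * Gq b N K) (fun K => 'X^c * (uu b c m K * Gq b N K))); last first.
  move=> K _; rewrite /uu addSn addnS exprS exprS mulN1r mulN1r opprK.
  apply: key_step0; rewrite TpSS; lia.
rewrite -!big_distrr /=; ring.
Qed.

Lemma jtp_fin b c m n : LL b c m n = SS b c m n.
Proof.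
elim: m n => [|m IHm] n.
  elim: n => [|n IHn].
    rewrite /LL /SS !big_ord0 mulr1 big_nat1 Gq0 /uu /Tp /=.
    by rewrite bin_small // !muln0 addn0 expr0 !mul1r.
  rewrite SS_stepn -IHn /LL big_ord_recr /=; ring.
rewrite SS_stepm -IHm /LL [in LHS]big_ord_recr /=; ring.
Qed.


Lemma Tp_bound b c M K : (0 < c)%N -> (c < b)%N ->
  (c * M + (M - K) + (K - M) <= b * Tp M K + c * K)%N.
Proof.
move=> c0 cb; have h := TpD M K.
case: (leqP K M) => hKM.
- have -> : (K - M = 0)%N by lia.
  nia.
- have -> : (M - K = 0)%N by lia.
  nia.
Qed.

Lemma qpoch_trunc b L k : (0 < b)%N -> (L <= k)%N -> eqm L (qpoch ('X^b) k) (qpoch ('X^b) L).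
Proof.
move=> b0; elim: k => [|k IH] hk.
  by have -> : L = 0%N by lia.
case: (leqP L k) => h.
  rewrite qpS -[X in eqm _ _ X]mulr1; apply: eqmM; first exact: IH.
  rewrite -exprM -[X in eqm _ _ X]subr0; apply: eqmD; first exact: eqm_refl.
  apply: eqmN; apply: eqmX0'; nia.
have -> : L = k.+1 by lia.
exact: eqm_refl.
Qed.

Lemma qpoch_inv b L : (0 < b)%N -> exists W, eqm L (qpoch ('X^b) L * W) 1.
Proof.
move=> b0; suff: forall k, exists W, eqm L (qpoch ('X^b) k * W) 1 by [].
elim=> [|k [W hW]].
  by exists 1; rewrite /qpoch big_ord0 mulr1; apply: eqm_refl.
have hk : (0 < b * k.+1)%N by rewrite muln_gt0 b0.
have [w hw] := geom_inv L (b * k.+1) hk.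
exists (W * w); rewrite qpS -exprM.
have -> : qpoch ('X^b) k * (1 - 'X^(b * k.+1)) * (W * w)
   = (qpoch ('X^b) k * W) * ((1 - 'X^(b * k.+1)) * w) by ring.
apply: (@eqm_trans _ _ (1 * 1)); [exact: eqmM | rewrite mulr1; exact: eqm_refl].
Qed.

Lemma qbin_lim b L a d M : (0 < b)%N -> (L <= a)%N -> (L <= d)%N -> (L <= M)%N ->
  eqm L (qbin ('X^b) a d * qpoch ('X^b) M) 1.
Proof.
move=> b0 ha hd hM.
have [W hW] := qpoch_inv b L b0.
have tr := qpoch_trunc b L _ b0.
set P := qpoch ('X^b) L.
have e := qbin_poch ('X^b) a d.
have h1 : eqm L (qbin ('X^b) a d * P * P) P.
  apply: eqm_trans (tr (a + d)%N _); last by lia.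
  rewrite -e; apply: eqmM; last by apply: eqm_sym; apply: tr.
  by apply: eqmM; [exact: eqm_refl| apply: eqm_sym; apply: tr].
apply: (@eqm_trans _ _ (qbin ('X^b) a d * P)).
  by apply: eqmM; [exact: eqm_refl| apply: tr].
apply: (@eqm_trans _ _ (qbin ('X^b) a d * P * P * W)).
  rewrite -mulrA -[X in eqm _ X _]mulr1; apply: eqmM; first exact: eqm_refl.
  exact: eqm_sym.
apply: eqm_trans hW; apply: eqmM => //; exact: eqm_refl.
Qed.

Definition Ex (b c M K : nat) : nat := (b * Tp M K + c * K - c * M)%N.
Definition Theta (b c M : nat) : {poly int} :=
  \sum_(0 <= K < (M + M).+1) (-1) ^+ (K + M) * 'X^(Ex b c M K).
Definition Pc (b c M : nat) : {poly int} := \prod_(i < M) (1 - 'X^(c + b * i)).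
Definition Pbc (b c M : nat) : {poly int} := \prod_(i < M) (1 - 'X^(b * i.+1 - c)).

Lemma prod_shift b c M : (c <= b)%N ->
  \prod_(i < M) ('X^c - 'X^(b * i.+1)) = 'X^(c * M) * Pbc b c M :> {poly int}.
Proof.
move=> cb; elim: M => [|M IH]; first by rewrite /Pbc !big_ord0 muln0 expr0 mulr1.
rewrite /Pbc !big_ord_recr /= -/(Pbc b c M) IH (mulnS c M) exprD.
have -> : 'X^(b * M.+1) = 'X^c * 'X^(b * M.+1 - c) :> {poly int}.
  by rewrite -exprD subnKC //; apply: leq_trans cb _; rewrite leq_pmulr.
ring.
Qed.

Lemma jtp_exact b c M : (0 < c)%N -> (c < b)%N ->
  Pc b c M * Pbc b c M =
  \sum_(0 <= K < (M + M).+1) (-1) ^+ (K + M) * 'X^(Ex b c M K) * Gq b (M + M) K.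
Proof.
move=> c0 cb.
have := jtp_fin b c M M; rewrite /LL /SS prod_shift ?(ltnW cb) // -/(Pc b c M).
rewrite (@eq_big_nat _ _ _ 0 (M + M).+1 _
   (fun K => 'X^(c * M) * ((-1) ^+ (K + M) * 'X^(Ex b c M K) * Gq b (M + M) K))); last first.
  move=> K _; rewrite /uu /Ex.
  have hb := Tp_bound b c M K c0 cb.
  have e : (b * Tp M K + c * K = c * M + (b * Tp M K + c * K - c * M))%N by lia.
  rewrite {1}e (exprD 'X); ring.
rewrite -big_distrr /= => e.
apply: (mulfI (x := 'X^(c * M))).
  by apply: expf_neq0; rewrite polyX_eq0.
rewrite -e; ring.
Qed.

Lemma eqm_sum_nat L m n (F G : nat -> {poly int}) :
  (forall i, (m <= i < n)%N -> eqm L (F i) (G i)) ->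
  eqm L (\sum_(m <= i < n) F i) (\sum_(m <= i < n) G i).
Proof.
move=> h k hk; rewrite !coef_sum; apply: eq_big_nat => i /h; exact.
Qed.

Lemma jtp_inf b c M L : (0 < c)%N -> (c < b)%N -> (L + L <= M)%N ->
  eqm L (Pc b c M * Pbc b c M * \prod_(i < M) (1 - 'X^(b * i.+1))) (Theta b c M).
Proof.
move=> c0 cb hLM.
have b0 : (0 < b)%N by apply: leq_ltn_trans cb.
have -> : \prod_(i < M) (1 - 'X^(b * i.+1)) = qpoch ('X^b) M :> {poly int}.
  by rewrite /qpoch; apply: eq_bigr => i _; rewrite exprM.
rewrite jtp_exact // big_distrl /=; apply: eqm_sum_nat => K /andP [_ hK].
have hb := Tp_bound b c M K c0 cb.
case: (boolP ((L <= K) && (L <= M + M - K))%N) => [/andP [h1 h2] | hn].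
  rewrite /Gq -ltnS hK -[X in eqm _ _ X]mulr1.
  have -> : forall x y z w : {poly int}, x * y * z * w = x * y * (z * w) by move=> *; ring.
  apply: eqmM; first exact: eqm_refl.
  apply: qbin_lim => //; lia.
have hE : (L <= Ex b c M K)%N by rewrite /Ex; move: hn; rewrite negb_and -!ltnNge; lia.
apply: (@eqm_trans _ _ 0).
  have -> : (-1) ^+ (K + M) * 'X^(Ex b c M K) * Gq b (M + M) K * qpoch 'X^b M
     = 'X^(Ex b c M K) * ((-1) ^+ (K + M) * Gq b (M + M) K * qpoch 'X^b M) by ring.
  exact: eqmX0.
apply: eqm_sym; rewrite mulrC; exact: eqmX0.
Qed.


Lemma comps_fuelS f n : comps_fuel f.+1 n.+1 =
  flatten [seq [seq k :: c | c <- comps_fuel f (n.+1 - k)] | k <- iota 1 n.+1].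
Proof. by []. Qed.

Lemma comps_fuel_eq n f1 f2 : (n <= f1)%N -> (n <= f2)%N ->
  comps_fuel f1 n = comps_fuel f2 n.
Proof.
elim/ltn_ind: n f1 f2 => n IH f1 f2.
case: n IH => [|n] IH h1 h2; first by case: f1 {h1}; case: f2 {h2}.
case: f1 h1 => [|f1] h1 //; case: f2 h2 => [|f2] h2 //.
rewrite !comps_fuelS.
congr flatten; apply/eq_in_map => k; rewrite mem_iota => /andP [hk1 hk2].
congr map; apply: IH; lia.
Qed.

Lemma compsS n : comps n.+1 =
  flatten [seq [seq k :: c | c <- comps (n.+1 - k)] | k <- iota 1 n.+1].
Proof.
rewrite /comps comps_fuelS; congr flatten; apply/eq_in_map => k.
rewrite mem_iota => /andP [hk1 hk2]; congr map; apply: comps_fuel_eq; lia.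
Qed.

Lemma comps0 : comps 0 = [:: [::]]. Proof. by []. Qed.

Lemma iota1_sum (R : Type) (idx : R) (op : Monoid.com_law idx) n (F : nat -> R) :
  \big[op/idx]_(k <- iota 1 n) F k = \big[op/idx]_(j < n) F j.+1.
Proof.
have -> : iota 1 n = [seq (1 + i)%N | i <- iota 0 n] by rewrite -iotaDl.
have -> : iota 0 n = index_iota 0 n by rewrite /index_iota subn0.
by rewrite big_map big_mkord.
Qed.

Lemma sum_compsS (F : seq nat -> int) n :
  \sum_(c <- comps n.+1) F c = \sum_(j < n.+1) \sum_(c <- comps (n - j)) F (j.+1 :: c).
Proof.
rewrite compsS big_flatten big_map iota1_sum; apply: eq_bigr => j _.
by rewrite big_map subSS.
Qed.

Lemma count_compsS (P : pred (seq nat)) n :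
  count P (comps n.+1) = (\sum_(j < n.+1) count (fun c => P (j.+1 :: c)) (comps (n - j)))%N.
Proof.
rewrite compsS count_flatten sumnE !big_map iota1_sum; apply: eq_bigr => j _.
by rewrite count_map subSS.
Qed.

Definition Csum (n : nat) : int :=
  \sum_(c <- comps n | all inP5 c) (-1) ^+ ellhat c.

Definition wsgn (k : nat) : int := if inP5 k then (-1) ^+ inPhat k else 0.

Lemma Csum0 : Csum 0 = 1.
Proof. by rewrite /Csum comps0 big_cons big_nil addr0. Qed.

Lemma CsumS n : Csum n.+1 = \sum_(j < n.+1) wsgn j.+1 * Csum (n - j).
Proof.
rewrite /Csum big_mkcond sum_compsS; apply: eq_bigr => j _.
rewrite /wsgn [in RHS]big_mkcond big_distrr /=; apply: eq_bigr => c _ /=.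
case: (inP5 j.+1) => /=; last by rewrite mul0r.
by case: (all inP5 c); rewrite ?mulr0 // /ellhat /= exprD.
Qed.

Definition ecoef (k : nat) : int := if k == 0%N then 1 else - wsgn k.

Definition Cp L : {poly int} := \poly_(i < L) Csum i.
Definition Ep L : {poly int} := \poly_(i < L) ecoef i.

Lemma coef_trunc_mul L (a b : nat -> int) i : (i < L)%N ->
  (\poly_(j < L) a j * \poly_(j < L) b j)`_i = \sum_(j < i.+1) a j * b (i - j)%N.
Proof.
move=> hi; rewrite coefM; apply: eq_bigr => j _.
rewrite !coef_poly; have hj := ltn_ord j.
have h1 : (j < L)%N by lia. have h2 : (i - j < L)%N by lia.
by rewrite h1 h2.
Qed.

Lemma CE L : eqm L (Ep L * Cp L) 1.
Proof.
move=> i hi; rewrite coef_trunc_mul // coef1.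
case: i hi => [|i] hi.
  by rewrite big_ord1 /ecoef /= Csum0 mulr1.
rewrite big_ord_recl /= /ecoef /= mul1r CsumS /=.
rewrite -big_split /=; apply: big1 => j _; rewrite /bump /= add1n subSS; ring.
Qed.

Definition Sp (p : nat) : bool := (p %% 5 == 1)%N || (p %% 5 == 4)%N.
Definition Qm (m : nat) (c : seq nat) : bool :=
  [&& sorted geq c, all Sp c & all (fun p => p <= m)%N c].
Definition T m N := count (Qm m) (comps N).

Lemma sorted_cons k c : sorted geq (k :: c) = all (fun p => p <= k)%N c && sorted geq c.
Proof.
rewrite /= path_sortedE //.
by move=> y x z /= h1 h2; exact: leq_trans h2 h1.
Qed.

Lemma Qm_cons m k c : Qm m (k :: c) = [&& (k <= m)%N, Sp k & Qm k c].
Proof.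
rewrite /Qm sorted_cons /=.
case hk: (k <= m)%N => /=; last by rewrite !andbF.
case hak: (all (fun p => p <= k)%N c) => /=; last by rewrite !andbF.
have -> : all (fun p => p <= m)%N c.
  by apply: sub_all hak => p /= hp; exact: leq_trans hp hk.
by case: (sorted geq c); case: (Sp k); case: (all Sp c).
Qed.

Lemma T0 m : T m 0 = 1%N. Proof. by []. Qed.

Lemma TS m N : T m N.+1 =
  (\sum_(j < N.+1) ((j.+1 <= m)%N && Sp j.+1) * T j.+1 (N - j))%N.
Proof.
rewrite /T count_compsS; apply: eq_bigr => j _.
rewrite (eq_count (a2 := fun c => ((j.+1 <= m)%N && Sp j.+1) && Qm j.+1 c)); last first.
  by move=> c; rewrite Qm_cons andbA.
case: ((j.+1 <= m)%N && Sp j.+1) => /=; first by rewrite mul1n.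
by rewrite count_pred0.
Qed.

Lemma sum_eqm n m (f : nat -> nat) :
  (\sum_(j < n) (nat_of_ord j == m) * f j = (m < n) * f m)%N.
Proof.
elim: n => [|n IH]; first by rewrite big_ord0.
rewrite big_ord_recr /= IH.
case: (ltngtP m n) => h.
- by rewrite ltnS (ltnW h) mul0n addn0.
- have e2 : (m < n.+1)%N = false by apply/negbTE; rewrite -leqNgt.
  by rewrite e2.
- by rewrite h ltnSn mul0n add0n.
Qed.

Lemma T_step m N : T m.+1 N = (T m N + (Sp m.+1 && (m.+1 <= N)) * T m.+1 (N - m.+1))%N.
Proof.
case: N => [|N]; first by rewrite !T0 andbF.
rewrite !TS.
rewrite (eq_bigr (fun j : 'I_N.+1 => ((j.+1 <= m)%N && Sp j.+1) * T j.+1 (N - j)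
     + (nat_of_ord j == m) * (Sp j.+1 * T j.+1 (N - j)))%N); last first.
  move=> j _; rewrite ltnS leq_eqVlt.
  case: (ltngtP j m) => h /=.
  - by rewrite mul0n addn0.
  - by rewrite mul0n addn0.
  - by rewrite mul0n add0n mul1n.
rewrite big_split /= (sum_eqm N.+1 m (fun j => Sp j.+1 * T j.+1 (N - j))%N) subSS ltnS.
by case: (Sp m.+1); case: (m <= N)%N; rewrite ?mul0n ?mul1n.
Qed.

Lemma T_stable N m : (N <= m)%N -> T m N = T N N.
Proof.
elim: m => [|m IH] h; first by have -> : N = 0%N by lia.
case: (leqP N m) => h'.
  rewrite T_step IH //.
  have -> : (m.+1 <= N)%N = false by apply/negbTE; rewrite -ltnNge ltnS.
  by rewrite andbF mul0n addn0.
by have -> : N = m.+1 by lia.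
Qed.

Lemma rr_T N : rr N = T N N.
Proof.
case: N => [|N]; first by [].
rewrite /rr count_compsS TS; apply: eq_bigr => j _.
rewrite (ltn_ord j) /=.
rewrite (eq_count (a2 := fun c => Sp j.+1 && Qm j.+1 c)); last first.
  move=> c; change ((sorted geq (j.+1 :: c) && (Sp j.+1 && all Sp c)) = Sp j.+1 && Qm j.+1 c).
  rewrite sorted_cons /Qm.
  by case: (Sp j.+1); case: (sorted geq c); case: (all Sp c); case: (all _ c).
by case: (Sp j.+1); rewrite /= ?mul1n ?mul0n ?count_pred0.
Qed.

Definition eqT {L p q r} (h1 : eqm L p q) (h2 : eqm L q r) : eqm L p r := eqm_trans _ _ _ _ h1 h2.

Definition Fp L m : {poly int} := \poly_(N < L) (T m N)%:Z.

Lemma F_step L m : eqm L (Fp L m.+1 * (if Sp m.+1 then 1 - 'X^(m.+1) else 1)) (Fp L m).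
Proof.
move=> i hi.
case hS: (Sp m.+1).
  rewrite mulrBr mulr1 coefB mulrC coefXnM !coef_poly hi T_step hS /=.
  case: (ltnP i m.+1) => h.
    by rewrite mul0n addn0 subr0.
  rewrite /= mul1n (leq_ltn_trans (leq_subr _ _) hi) PoszD; ring.
by rewrite mulr1 !coef_poly hi T_step hS /= mul0n addn0.
Qed.

Lemma Sp_mod j r : Sp (5 * j + r) = Sp r.
Proof. by rewrite /Sp mulnC modnMDl. Qed.

Lemma F_block L j : eqm L (Fp L (5 * j + 5) * ((1 - 'X^(5 * j + 1)) * (1 - 'X^(5 * j + 4))))
                         (Fp L (5 * j)).
Proof.
have s1 := F_step L (5 * j); rewrite -addn1 Sp_mod /= in s1.
have s2 := F_step L (5 * j + 1); rewrite (_ : (5 * j + 1).+1 = 5 * j + 2)%N in s2; last by lia.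
rewrite Sp_mod /= mulr1 in s2.
have s3 := F_step L (5 * j + 2); rewrite (_ : (5 * j + 2).+1 = 5 * j + 3)%N in s3; last by lia.
rewrite Sp_mod /= mulr1 in s3.
have s4 := F_step L (5 * j + 3); rewrite (_ : (5 * j + 3).+1 = 5 * j + 4)%N in s4; last by lia.
rewrite Sp_mod /= in s4.
have s5 := F_step L (5 * j + 4); rewrite (_ : (5 * j + 4).+1 = 5 * j + 5)%N in s5; last by lia.
rewrite Sp_mod /= mulr1 in s5.
apply: eqT s1.
have -> : Fp L (5 * j + 5) * ((1 - 'X^(5 * j + 1)) * (1 - 'X^(5 * j + 4)))
   = Fp L (5 * j + 5) * (1 - 'X^(5 * j + 4)) * (1 - 'X^(5 * j + 1)) by ring.
apply: eqmM; last exact: eqm_refl.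
apply: eqT (eqT s3 s2).
apply: eqT s4.
apply: eqmM; last exact: eqm_refl.
exact: s5.
Qed.

Lemma F_zero L : eqm L (Fp L 0) 1.
Proof.
move=> i hi; rewrite coef_poly hi coef1.
case: i hi => [|i] hi //=.
rewrite TS; apply/eqP; rewrite eqz_nat; apply/eqP.
by apply: big1 => j _.
Qed.

Lemma F_all L M : eqm L (Fp L (5 * M) *
   \prod_(i < M) ((1 - 'X^(5 * i + 1)) * (1 - 'X^(5 * i + 4)))) 1.
Proof.
elim: M => [|M IH]; first by rewrite big_ord0 mulr1 muln0; exact: F_zero.
rewrite big_ord_recr /=.
set P := \prod_(i < M) _.
have -> : (5 * M.+1 = 5 * M + 5)%N by rewrite mulnS addnC.
have -> : Fp L (5 * M + 5) * (P * ((1 - 'X^(5 * M + 1)) * (1 - 'X^(5 * M + 4))))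
   = (Fp L (5 * M + 5) * ((1 - 'X^(5 * M + 1)) * (1 - 'X^(5 * M + 4)))) * P by ring.
apply: eqT IH; apply: eqmM; last exact: eqm_refl.
exact: F_block.
Qed.


Lemma ExD b c M K : (0 < c)%N -> (c < b)%N ->
  ((Ex b c M K)%:Z * 2 = (K%:Z - M%:Z) * (b%:Z * (K%:Z - M%:Z) - b%:Z + 2 * c%:Z))%R.
Proof.
move=> c0 cb; have h1 := Tp_bound b c M K c0 cb; have h2 := TpD M K.
rewrite /Ex.
have -> : ((b * Tp M K + c * K - c * M)%N%:Z = b%:Z * (Tp M K)%:Z + c%:Z * K%:Z - c%:Z * M%:Z)%R.
  rewrite -subzn; last by lia.
  by rewrite PoszD !PoszM.
transitivity (b%:Z * ((Tp M K)%:Z * 2) + 2 * c%:Z * (K%:Z - M%:Z))%R; first ring.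
rewrite h2; ring.
Qed.

Lemma coef_sgnX s e i : (((-1) ^+ s * 'X^e : {poly int})`_i = (-1) ^+ s * (i == e)%:R)%R.
Proof.
have -> : ((-1) ^+ s : {poly int}) = ((-1) ^+ s : int)%:P by rewrite rmorphXn rmorphN1.
by rewrite coefCM coefXn.
Qed.

Lemma sym_sum (F : int -> int) M :
  \sum_(0 <= K < (M + M).+1) F (K%:Z - M%:Z) =
  F 0 + \sum_(m < M) (F (m.+1)%:Z + F (- (m.+1)%:Z)).
Proof.
elim: M => [|M IH]; first by rewrite big_nat1 big_ord0 subrr addr0.
rewrite addSn addnS big_nat_recl // big_nat_recr //= big_ord_recr /=.
rewrite (eq_big_nat _ _ (F2 := fun K => F (K%:Z - M%:Z))); last first.
  by move=> K _; congr F; lia.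
rewrite IH.
have -> : (((M + M).+2)%:Z - (M.+1)%:Z = (M.+1)%:Z)%R by lia.
have -> : (0%:Z - M.+1%:Z = - M.+1%:Z)%R by rewrite sub0r.
ring.
Qed.

Lemma sgn_dist K M : ((-1) ^+ (K + M) = (-1) ^+ `|K%:Z - M%:Z|%N :> int)%R.
Proof.
have hn : (K + M = `|K%:Z - M%:Z|%N + 2 * minn K M)%N by lia.
by rewrite hn -signr_odd oddD oddM /= addbF signr_odd.
Qed.

Definition gth b c i (j : int) : int :=
  if (j * (b%:Z * j - b%:Z + 2 * c%:Z) == 2 * i%:Z)%R then (-1) ^+ `|j|%N else 0.

Lemma Theta_coef b c M i : (0 < c)%N -> (c < b)%N ->
  (Theta b c M)`_i = gth b c i 0 + \sum_(m < M) (gth b c i (m.+1)%:Z + gth b c i (- (m.+1)%:Z)).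
Proof.
move=> c0 cb; rewrite /Theta coef_sum -sym_sum; apply: eq_big_nat => K _.
rewrite coef_sgnX /gth sgn_dist.
have e : (i == Ex b c M K) = ((K%:Z - M%:Z) * (b%:Z * (K%:Z - M%:Z) - b%:Z + 2 * c%:Z) == 2 * i%:Z)%R.
  rewrite -ExD //; apply/eqP/eqP => h; lia.
by rewrite e; case: ifP => _; rewrite ?mulr1 ?mulr0.
Qed.

Lemma gth_big b c i m : (0 < c)%N -> (c < b)%N -> (i <= m)%N ->
  gth b c i (m.+1)%:Z = 0 /\ gth b c i (- (m.+1)%:Z) = 0.
Proof.
move=> c0 cb hm; rewrite /gth; split; case: ifP => // /eqP h; nia.
Qed.

Lemma Theta_coef' b c M i : (0 < c)%N -> (c < b)%N -> (i <= M)%N ->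
  (Theta b c M)`_i = gth b c i 0 + \sum_(m < i) (gth b c i (m.+1)%:Z + gth b c i (- (m.+1)%:Z)).
Proof.
move=> c0 cb hM; rewrite Theta_coef //; congr (_ + _).
rewrite (big_ord_widen _ (fun m => gth b c i (m.+1)%:Z + gth b c i (- (m.+1)%:Z)) hM).
rewrite [in RHS]big_mkcond /=; apply: eq_bigr => m _.
case: ltnP => // h; have [-> ->] := gth_big b c i m c0 cb h; by rewrite addr0.
Qed.

Lemma acoef_gth i : acoef i = gth 5 2 i 0 + \sum_(m < i) (gth 5 2 i (m.+1)%:Z + gth 5 2 i (- (m.+1)%:Z)).
Proof.
rewrite /acoef -sym_sum (_ : (2 * i = i + i)%N); last by lia.
rewrite -(big_mkord xpredT (fun k => let j := (k%:Z - i%:Z)%R in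
   if (j * (5 * j - 1) == 2 * i%:Z)%R then (-1) ^+ `|j|%N else 0)).
apply: eq_big_nat => k _ /=; rewrite /gth.
by have -> : ((5%:Z * (k%:Z - i%:Z) - 5%:Z + 2 * 2%:Z) = 5 * (k%:Z - i%:Z) - 1)%R by ring.
Qed.

Definition Ap3 i m := (2 * i == m.+1 * (3 * m + 2))%N.
Definition Bp3 i m := (2 * i == m.+1 * (3 * m + 4))%N.
Definition Pp3 i m := Ap3 i m || Bp3 i m.

Lemma gth3_pos i m : gth 3 1 i (m.+1)%:Z = if Ap3 i m then (-1) ^+ m.+1 else 0.
Proof.
rewrite /gth /Ap3; have -> : `|(m.+1)%:Z|%N = m.+1 by [].
congr (if _ then _ else _); apply/eqP/eqP => h; nia.
Qed.

Lemma gth3_neg i m : gth 3 1 i (- (m.+1)%:Z) = if Bp3 i m then (-1) ^+ m.+1 else 0.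
Proof.
rewrite /gth /Bp3 abszN; have -> : `|(m.+1)%:Z|%N = m.+1 by [].
congr (if _ then _ else _); apply/eqP/eqP => h; nia.
Qed.

Lemma AB_excl i m : Ap3 i m -> Bp3 i m -> False.
Proof. rewrite /Ap3 /Bp3 => /eqP h1 /eqP h2; nia. Qed.

Lemma P3_uniq i m1 m2 : Pp3 i m1 -> Pp3 i m2 -> m1 = m2.
Proof.
rewrite /Pp3 /Ap3 /Bp3.
wlog h : m1 m2 / (m1 <= m2)%N.
  move=> W h1 h2; case: (leqP m1 m2) => hl; first exact: W.
  by apply/esym; apply: W => //; apply: ltnW.
move=> /orP [] /eqP h1 /orP [] /eqP h2; case: (ltngtP m1 m2) => // hl; nia.
Qed.

Lemma inP5E i : inP5 i = has (Pp3 i) (iota 0 i).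
Proof.
rewrite /inP5 (_ : iota 1 i = [seq (1 + m)%N | m <- iota 0 i]); last by rewrite -iotaDl.
rewrite has_map; apply: eq_has => m /=; rewrite /Pp3 /Ap3 /Bp3 orbC.
rewrite (_ : (3 * (1 + m) + 1 = 3 * m + 4)%N); last by lia.
rewrite (_ : (3 * (1 + m) - 1 = 3 * m + 2)%N); last by lia.
by rewrite add1n.
Qed.

Lemma inPhatE i : inPhat i = has (fun m => ~~ odd m.+1 && Pp3 i m) (iota 0 i).
Proof.
rewrite /inPhat (_ : iota 1 i = [seq (1 + m)%N | m <- iota 0 i]); last by rewrite -iotaDl.
rewrite has_map; apply: eq_has => m /=; rewrite /Pp3 /Ap3 /Bp3 [Ap3 _ _ || _]orbC.
rewrite (_ : (3 * (1 + m) + 1 = 3 * m + 4)%N); last by lia.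
rewrite (_ : (3 * (1 + m) - 1 = 3 * m + 2)%N); last by lia.
by rewrite add1n.
Qed.

Lemma ecoef_gth i : ecoef i = gth 3 1 i 0 + \sum_(m < i) (gth 3 1 i (m.+1)%:Z + gth 3 1 i (- (m.+1)%:Z)).
Proof.
case: i => [|i]; first by rewrite big_ord0 /ecoef /gth /= addr0.
have -> : gth 3 1 i.+1 0 = 0.
  by rewrite /gth mul0r (_ : (0 == 2 * (i.+1)%:Z :> int) = false) //; apply/eqP; lia.
rewrite add0r /ecoef /= /wsgn inP5E inPhatE.
rewrite (eq_bigr (fun m : 'I_i.+1 => if Pp3 i.+1 m then (-1) ^+ m.+1 else 0)); last first.
  move=> m _; rewrite gth3_pos gth3_neg /Pp3.
  case hA: (Ap3 i.+1 m); case hB: (Bp3 i.+1 m) => /=; rewrite ?addr0 ?add0r //.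
  by case: (AB_excl _ _ hA hB).
case: hasP => [[m0 hm0 hP] | hn].
  rewrite mem_iota add0n in hm0; move/andP: hm0 => [_ hm0].
  have -> : has (fun m => ~~ odd m.+1 && Pp3 i.+1 m) (iota 0 i.+1) = ~~ odd m0.+1.
    apply/hasP/idP => [[m hm /andP [ho hPm]] | ho].
      by rewrite -(P3_uniq _ _ _ hPm hP).
    by exists m0; [rewrite mem_iota add0n hm0 | rewrite ho hP].
  rewrite (bigD1 (Ordinal hm0)) //= hP big1 ?addr0; last first.
    move=> j hj; case: ifP => // hPj; exfalso; move: hj => /eqP; apply.
    by apply: val_inj => /=; exact: P3_uniq _ _ _ hPj hP.
  rewrite negbK exprS -[(-1) ^+ m0]signr_odd; case: (odd m0); rewrite /= ?expr0 ?expr1 mulN1r ?opprK //.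
rewrite big1 ?oppr0 //.
move=> m _; case: ifP => // hPm; exfalso; apply: hn; exists (nat_of_ord m) => //.
by rewrite mem_iota add0n ltn_ord.
Qed.


Lemma qpoch_add Q k n : qpoch Q (k + n) = qpoch Q k * \prod_(j < n) (1 - Q ^+ (k + j).+1).
Proof.
elim: n => [|n IH]; first by rewrite addn0 big_ord0 mulr1.
by rewrite addnS qpS IH big_ord_recr /= mulrA.
Qed.

Lemma resid5 M : qpoch 'X (5 * M) =
  (\prod_(i < M) ((1 - 'X^(5 * i + 1)) * (1 - 'X^(5 * i + 4)))) *
  (Pc 5 2 M * Pbc 5 2 M * \prod_(i < M) (1 - 'X^(5 * i.+1))).
Proof.
elim: M => [|M IH]; first by rewrite /Pc /Pbc !big_ord0 muln0 /qpoch big_ord0 !mulr1.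
rewrite (_ : 5 * M.+1 = 5 * M + 5)%N; last by lia.
rewrite qpoch_add IH /Pc /Pbc !big_ord_recr big_ord0 /=.
rewrite (_ : (5 * M + 0).+1 = 5 * M + 1)%N; last by lia.
rewrite (_ : (5 * M + 1).+1 = 2 + 5 * M)%N; last by lia.
rewrite (_ : (5 * M + 2).+1 = 5 * M.+1 - 2)%N; last by lia.
rewrite (_ : (5 * M + 3).+1 = 5 * M + 4)%N; last by lia.
rewrite (_ : (5 * M + 4).+1 = 5 * M.+1)%N; last by lia.
ring.
Qed.

Lemma resid3 M : qpoch 'X (3 * M) =
  Pc 3 1 M * Pbc 3 1 M * \prod_(i < M) (1 - 'X^(3 * i.+1)).
Proof.
elim: M => [|M IH]; first by rewrite /Pc /Pbc !big_ord0 muln0 /qpoch big_ord0 !mulr1.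
rewrite (_ : 3 * M.+1 = 3 * M + 3)%N; last by lia.
rewrite qpoch_add IH /Pc /Pbc !big_ord_recr big_ord0 /=.
rewrite (_ : (3 * M + 0).+1 = 1 + 3 * M)%N; last by lia.
rewrite (_ : (3 * M + 1).+1 = 3 * M.+1 - 1)%N; last by lia.
rewrite (_ : (3 * M + 2).+1 = 3 * M.+1)%N; last by lia.
ring.
Qed.

Theorem mainTheorem16 (n : nat) :
  (rr n)%:Z =
  \sum_(i < n.+1)
     acoef i * \sum_(c <- comps (n - i) | all inP5 c) (-1) ^+ ellhat c.
Proof.
set L := n.+1; set M := (L + L)%N.
have hLM : (L + L <= M)%N by [].
have E1 : eqm L (Ep L) (qpoch 'X (3 * M)).
  apply: (@eqT _ _ (Theta 3 1 M)); last first.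
    rewrite resid3; apply: eqm_sym; exact: jtp_inf.
  move=> i hi; rewrite coef_poly hi Theta_coef' // ?ecoef_gth //; lia.
have A1 : eqm L (Pc 5 2 M * Pbc 5 2 M * \prod_(i < M) (1 - 'X^(5 * i.+1))) (\poly_(i < L) acoef i).
  apply: (@eqT _ _ (Theta 5 2 M)); first exact: jtp_inf.
  move=> i hi; rewrite coef_poly hi Theta_coef' // ?acoef_gth //; lia.
have Q35 : eqm L (qpoch 'X (3 * M)) (qpoch 'X (5 * M)).
  have t := qpoch_trunc 1 L; rewrite expr1 in t.
  apply: (@eqT _ _ (qpoch 'X L)); first by apply: t => //; lia.
  by apply: eqm_sym; apply: t => //; lia.
set Rp := Fp L (5 * M).
have R1 := F_all L M.
set PS := \prod_(i < M) _ in R1.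
have main : eqm L Rp (\poly_(i < L) acoef i * Cp L).
  apply: (@eqT _ _ (Rp * (Ep L * Cp L))).
    rewrite -[X in eqm _ X _]mulr1; apply: eqmM; first exact: eqm_refl.
    by apply: eqm_sym; apply: CE.
  apply: (@eqT _ _ (Rp * (qpoch 'X (5 * M) * Cp L))).
    apply: eqmM; first exact: eqm_refl.
    apply: eqmM; last exact: eqm_refl.
    exact: eqT E1 Q35.
  rewrite resid5.
  have -> : Rp * (PS * (Pc 5 2 M * Pbc 5 2 M * \prod_(i < M) (1 - 'X^(5 * i.+1))) * Cp L)
    = (Rp * PS) * ((Pc 5 2 M * Pbc 5 2 M * \prod_(i < M) (1 - 'X^(5 * i.+1))) * Cp L) by ring.
  rewrite -[X in eqm _ _ X]mul1r; apply: eqmM; first exact: R1.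
  apply: eqmM; first exact: A1.
  exact: eqm_refl.
have := main n (ltnSn n).
have hs : (n <= 5 * M)%N by rewrite /M /L; lia.
rewrite coef_poly ltnSn /Rp rr_T -(T_stable n (5 * M) hs).
move=> ->; rewrite /Cp coef_trunc_mul //.
Qed.
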